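(* For each $N\ge1$ let $\{a_n\}_{n=0}^{N-1},\{b_n\}_{n=0}^{N-1},\{c_n\}_{n=1}^{N}$ (depending on $N$) be real sequences with $c_n>0$, $a_{N-1}=0$, $b_{N-1}=\tfrac12$, $c_N=1$, satisfying for $n=1,\dots,N-1$ $$a_{n-1}=a_n\Big(\frac{1}{c_n^2+1}\Big)^{1/2}+b_n\Big(\frac{1}{c_n^2+1}\Big)^{3/2}c_n^2,\quad b_{n-1}=b_n\Big(\frac{1}{c_n^2+1}\Big)^{3/2}+\frac{c_n}{c_n^2+1},\quad a_n+b_n=\frac{1-c_n^2}{c_n(1+c_n^2)^{1/2}},$$ and with $\Delta t_N=1/N$, $\Sigma_0>0$, $\sigma_u>0$ define $\Sigma_n=\Sigma_{n-1}/(1+c_n^2)$, $\beta_n=c_n\sigma_u\Delta t_N^{1/2}\Sigma_{n-1}^{-1/2}$, $\lambda_n=\beta_n\Sigma_{n-1}/(\beta_n^2\Sigma_{n-1}+\sigma_u^2\Delta t_N)$ for $n=1,\dots,N$. Then for every $t\in(0,1)$, as $N\to\infty$: $c_{[Nt]}\to0$, $b_{[Nt]}\to\infty$, $a_{[Nt]}\to\infty$, and $$\frac{c_{[Nt]}}{\Delta t_N^{1/2}}\to\frac{1}{(1-t)^{1/2}},\quad b_{[Nt]}\Delta t_N^{1/2}\to\tfrac12(1-t)^{1/2},\quad a_{[Nt]}\Delta t_N^{1/2}\to\tfrac12(1-t)^{1/2},$$ $$\Sigma_{[Nt]}\to(1-t)\Sigma_0,\qquad \lambda_{[Nt]}\to\frac{\Sigma_0^{1/2}}{\sigma_u},\qquad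 \frac{\beta_{[Nt]}}{\Delta t_N}\to\frac{\sigma_u}{(1-t)\Sigma_0^{1/2}}.$$
   Context: $[x]$ denotes the integer part of $x$. These sequences describe the equilibrium of the risk-neutral insider model (Model 2) of an $N$-period Kyle-type insider trading model, where $\Sigma_n$ is the conditional variance of the asset value after $n$ rounds, $\lambda_n$ the liquidity parameter and $\beta_n$ the insider's trading intensity; the claim concerns only the sequences as defined here. *)

(* Defs.v *)
From Stdlib Require Import Reals Lra Lia.
From Coquelicot Require Import Coquelicot.
Open Scope R_scope.

(* Integer part [x] as a natural number (used for x = N t >= 0). *)
Definition ipart (x : R) : nat := Z.to_nat (Int_part x).

Definition dt (N : nat) : R := / INR N.

(* Hypotheses on the sequences a_n (n=0..N-1), b_n (n=0..N-1), c_n (n=1..N)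
   for a fixed N >= 1. *)
Definition model2_seqs (N : nat) (a b c : nat -> R) : Prop :=
  (forall n, (1 <= n <= N)%nat -> 0 < c n) /\
  a (N - 1)%nat = 0 /\ b (N - 1)%nat = 1 / 2 /\ c N = 1 /\
  (forall n, (1 <= n <= N - 1)%nat ->
     a (n - 1)%nat = a n * sqrt (1 / (c n ^ 2 + 1))
                     + b n * Rpower (1 / (c n ^ 2 + 1)) (3 / 2) * c n ^ 2 /\
     b (n - 1)%nat = b n * Rpower (1 / (c n ^ 2 + 1)) (3 / 2)
                     + c n / (c n ^ 2 + 1) /\
     a n + b n = (1 - c n ^ 2) / (c n * sqrt (1 + c n ^ 2))).

Fixpoint Sigma (Sigma0 : R) (c : nat -> R) (n : nat) : R :=
  match n with
  | O => Sigma0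
  | S m => Sigma Sigma0 c m / (1 + c (S m) ^ 2)
  end.

Definition beta (N : nat) (Sigma0 sigu : R) (c : nat -> R) (n : nat) : R :=
  c n * sigu * sqrt (dt N) / sqrt (Sigma Sigma0 c (n - 1)).

Definition lambda (N : nat) (Sigma0 sigu : R) (c : nat -> R) (n : nat) : R :=
  beta N Sigma0 sigu c n * Sigma Sigma0 c (n - 1) /
  (beta N Sigma0 sigu c n ^ 2 * Sigma Sigma0 c (n - 1) + sigu ^ 2 * dt N).

(* Main.v *)
Require Import Defs.
From Stdlib Require Import Reals Lra Lia Psatz Nsatz.
From Coquelicot Require Import Coquelicot.
Open Scope R_scope.




Lemma sqrt_1_div (x : R) : 0 < x -> sqrt (1 / x) = / sqrt x.
Proof.
  intro Hx. unfold Rdiv. rewrite Rmult_1_l. apply sqrt_inv.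
Qed.

Lemma pair_rel (c e : R) : 0 < c -> 0 < e ->
  (1 - c^2) / (c * sqrt (1 + c^2)) = 1 / (e * (1 + e^2)) ->
  1 < / c^2 /\ / c^2 <= / e^2 + 1 /\
  (1 <= / e^2 -> / e^2 + 1/2 <= / c^2 /\ / e^2 + 1 - / (/ e^2) <= / c^2).
Proof.
  intros Hc He Heq.
  set (r := sqrt (1 + c^2)).
  assert (Hr : 0 < r) by (apply sqrt_lt_R0; nra).
  assert (Hr2 : r * r = 1 + c^2) by (apply sqrt_sqrt; nra).
  assert (H1 : (1 - c^2) * (e * (1 + e^2)) = c * r).
  { assert (He3 : 0 < e * (1 + e^2)) by nra.
    assert (Hcr : 0 < c * r) by nra.
    replace (1 - c^2) with ((1 - c^2) / (c * r) * (c * r)) by (field; lra).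
    fold r in Heq. rewrite Heq. field. split; nra. }
  assert (Hlt : c^2 < 1).
  { assert (0 < (1 - c^2) * (e * (1 + e^2))) by nra.
    destruct (Rlt_dec (c^2) 1) as [|Hn]; auto. exfalso.
    assert (0 <= (c^2 - 1) * (e * (1 + e^2))) by (apply Rmult_le_pos; nra). lra. }
  assert (H2 : (1 - c^2)^2 * e^2 * (1 + e^2)^2 = c^2 * (1 + c^2)).
  { rewrite <- Hr2. replace ((1 - c^2)^2 * e^2 * (1 + e^2)^2) with
      (((1 - c^2) * (e * (1 + e^2)))^2) by ring. rewrite H1. ring. }
  set (u := / c^2). set (v := / e^2).
  assert (Hc2 : 0 < c^2) by nra. assert (He2 : 0 < e^2) by nra.
  assert (Hu : c^2 = / u) by (unfold u; field; lra).
  assert (Hv : e^2 = / v) by (unfold v; field; lra).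
  assert (Hu1 : 1 < u) by (unfold u; rewrite <- Rinv_1; apply Rinv_lt_contravar; lra).
  assert (Hv0 : 0 < v) by (unfold v; apply Rinv_0_lt_compat; lra).
  assert (P : (u-1)^2*(v+1)^2 = v^3*(u+1)).
  { rewrite Hu, Hv in H2.
    assert (Hu0 : u <> 0) by lra. assert (Hv0' : v <> 0) by lra.
    transitivity (u^2 * v^3 * ((1 - /u)^2 * /v * (1 + /v)^2)).
    { field; lra. } rewrite H2. field; lra. }
  clearbody u v. clear Heq H1 H2 Hu Hv Hr Hr2 r.
  split; [lra|]. split.
  - destruct (Rle_dec u (v+1)) as [|Hn]; [lra|].
    exfalso. set (w := u - 1). assert (w > v) by (unfold w; lra).
    assert (P' : w^2*(v+1)^2 = v^3*(w+2)) by (unfold w; replace (u-1+2) with (u+1) by ring; exact P).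
    assert (A1 : w*(v+1)^2 - v^3 > 2*v^2+v).
    { assert (0 < (w - v)*(v+1)^2) by (apply Rmult_lt_0_compat; nra). nra. }
    assert (A2 : w*(w*(v+1)^2 - v^3) > v*(2*v^2+v)).
    { assert (0 < (w - v)*(w*(v+1)^2 - v^3)) by (apply Rmult_lt_0_compat; nra).
      assert (0 < v*((w*(v+1)^2 - v^3) - (2*v^2+v))) by (apply Rmult_lt_0_compat; nra).
      nra. }
    nra.
  - intro Hv1. set (w := u - 1).
    assert (Hw : 0 < w) by (unfold w; lra).
    assert (P' : (v+1)^2*w^2 - v^3*w - 2*v^3 = 0) by (unfold w; nra).
    assert (key : forall w0, 0 <= w0 -> (v+1)^2*w0^2 - v^3*w0 - 2*v^3 < 0 -> w0 < w).
    { intros w0 Hw0 E0.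
      assert (Id : - w * ((v+1)^2*w0^2 - v^3*w0 - 2*v^3)
                   = (w - w0) * ((v+1)^2*w*w0 + 2*v^3)).
      { transitivity (w0 * ((v+1)^2*w^2 - v^3*w - 2*v^3) - w * ((v+1)^2*w0^2 - v^3*w0 - 2*v^3)).
        rewrite P'. ring. ring. }
      assert (0 < - w * ((v+1)^2*w0^2 - v^3*w0 - 2*v^3)) by nra.
      assert (0 < (v+1)^2*w*w0 + 2*v^3) by (assert (0 <= (v+1)^2*w*w0) by
        (apply Rmult_le_pos; [apply Rmult_le_pos|]; nra); nra).
      nra. }
    split.
    + assert (v - 1/2 < w) by (apply key; nra). unfold w in *; lra.
    + assert (v - / v < w).
      { apply key.
        - assert (/ v <= 1) by (rewrite <- Rinv_1; apply Rinv_le_contravar; lra). lra.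
        - assert (EE : v^2 * ((v+1)^2*(v - /v)^2 - v^3*(v - /v) - 2*v^3)
                  = -4*v^3 - v^2 + 2*v + 1) by (field; lra).
          set (X := (v+1)^2*(v - /v)^2 - v^3*(v - /v) - 2*v^3) in *.
          clearbody X. destruct (Rlt_dec X 0) as [|Hn]; auto. exfalso.
          assert (0 <= v^2 * X) by (apply Rmult_le_pos; nra). nra. }
      unfold w in *; lra.
Qed.


Lemma rpow32 (q : R) : 0 < q -> Rpower q (3/2) = q * sqrt q.
Proof.
  intro Hq. replace (3/2) with (1 + /2) by field.
  rewrite Rpower_plus, Rpower_1, Rpower_sqrt; auto.
Qed.

Lemma step_alg (a b c a' b' : R) : 0 < c ->
  a' = a * sqrt (1 / (c ^ 2 + 1)) + b * Rpower (1 / (c ^ 2 + 1)) (3 / 2) * c ^ 2 ->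
  b' = b * Rpower (1 / (c ^ 2 + 1)) (3 / 2) + c / (c ^ 2 + 1) ->
  a + b = (1 - c ^ 2) / (c * sqrt (1 + c ^ 2)) ->
  a' + b' = 1 / (c * (1 + c ^ 2)) /\
  b' - a' = (b - a) * (/ sqrt (c^2+1))^3 + 2 * c^3 * (/ sqrt (c^2+1))^4.
Proof.
  intros Hc Ha Hb Hs.
  assert (Hq : 0 < c^2 + 1) by nra.
  set (r := sqrt (c^2+1)) in *.
  assert (Hr : 0 < r) by (apply sqrt_lt_R0; lra).
  assert (Hr2 : r * r = c*c + 1) by (unfold r; rewrite sqrt_sqrt; lra).
  assert (E1 : sqrt (1 / (c ^ 2 + 1)) = / r).
  { unfold Rdiv; rewrite Rmult_1_l, sqrt_inv; reflexivity. }
  assert (E2 : 1 / (c^2+1) = /r * /r).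
  { rewrite <- Rinv_mult, Hr2. field. nra. }
  assert (E3 : Rpower (1 / (c ^ 2 + 1)) (3 / 2) = /r * /r * /r).
  { rewrite rpow32 by (apply Rdiv_lt_0_compat; lra). rewrite E1, E2. ring. }
  assert (E4 : sqrt (1 + c^2) = r) by (unfold r; f_equal; ring).
  rewrite E1, E3 in Ha. rewrite E3 in Hb.
  replace (c / (c^2+1)) with (c * (1 / (c^2+1))) in Hb by (field; lra).
  rewrite E2 in Hb. rewrite E4 in Hs.
  replace (1 / (c * (1 + c^2))) with (/c * (1 / (c^2+1))) by (field; lra).
  rewrite E2.
  replace ((1 - c ^ 2) / (c * r)) with ((1 - c*c) * /c * /r) in Hs by (field; lra).
  assert (Hic : c * / c = 1) by (field; lra).
  assert (Hir : r * / r = 1) by (field; lra).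
  set (ic := / c) in *. set (ir := / r) in *. clearbody ic ir r.
  replace (c^2) with (c*c) in Ha by ring.
  replace (c^3) with (c*c*c) by ring.
  clear E1 E2 E3 E4 Hq Hr. replace (ir^3) with (ir*ir*ir) by ring. replace (ir^4) with (ir*ir*ir*ir) by ring. split.
  - subst a' b'. nsatz.
  - subst a' b'. nsatz.
Qed.

Lemma d_bound_step (d c : R) : 0 < c -> 0 <= d <= 1 ->
  0 <= d * (/ sqrt (c^2+1))^3 + 2 * c^3 * (/ sqrt (c^2+1))^4 <= 1.
Proof.
  intros Hc Hd.
  assert (Hq : 0 < c^2 + 1) by nra.
  set (r := sqrt (c^2+1)) in *.
  assert (Hr : 0 < r) by (apply sqrt_lt_R0; lra).
  assert (Hr2 : r * r = c*c + 1) by (unfold r; rewrite sqrt_sqrt; lra).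
  assert (Hr1 : 1 <= r) by nra.
  assert (Hir : r * / r = 1) by (field; lra).
  assert (Hi0 : 0 < / r) by (apply Rinv_0_lt_compat; lra).
  set (ir := / r) in *. clearbody ir r.
  assert (Hi1 : ir <= 1) by nra.
  assert (K : ir * ir * (c*c + 1) = 1) by (rewrite <- Hr2; replace (ir*ir*(r*r)) with ((r*ir)*(r*ir)) by ring; rewrite Hir; ring).
  assert (T1 : d * ir^3 <= ir * ir).
  { assert (0 <= ir^3) by (apply pow_le; lra).
    assert (d*ir^3 <= 1*ir^3) by (apply Rmult_le_compat_r; lra).
    assert (ir^3 <= ir*ir*1) by (replace (ir^3) with (ir*ir*ir) by ring; apply Rmult_le_compat_l; nra).
    lra. }
  assert (T2 : 2 * c^3 * ir^4 <= c*c * (ir * ir)).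
  { assert (0 <= (c-1)*(c-1)*(ir*ir)) by (apply Rmult_le_pos; [apply (Rle_0_sqr (c-1)) | apply (Rle_0_sqr ir)]).
    assert (H2c : 2 * c * (ir*ir) <= 1) by lra.
    assert (0 <= c*c*(ir*ir)) by nra.
    replace (2 * c^3 * ir^4) with ((c*c*(ir*ir)) * (2*c*(ir*ir))) by ring.
    replace (c*c*(ir*ir)) with ((c*c*(ir*ir))*1) at 2 by ring.
    apply Rmult_le_compat_l; lra. }
  split.
  - assert (0 <= d * ir^3) by (apply Rmult_le_pos; [lra| apply pow_le; lra]).
    assert (0 <= 2 * c^3 * ir^4) by (apply Rmult_le_pos; [ apply Rmult_le_pos; [lra|apply pow_le;lra] | apply pow_le; lra]).
    lra.
  - lra.
Qed.


Lemma sqrt_step (x : R) : 1 <= x ->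
  (x + 1) - 3 * sqrt (x + 1) <= x - 3 * sqrt x + 1 - 2 / (x + 1).
Proof.
  intro Hx.
  assert (Hp : 0 < sqrt x) by (apply sqrt_lt_R0; lra).
  assert (Hq : 0 < sqrt (x+1)) by (apply sqrt_lt_R0; lra).
  assert (Hp2 : sqrt x * sqrt x = x) by (apply sqrt_sqrt; lra).
  assert (Hq2 : sqrt (x+1) * sqrt (x+1) = x + 1) by (apply sqrt_sqrt; lra).
  set (p := sqrt x) in *. set (q := sqrt (x+1)) in *. clearbody p q.
  assert (Hpq : p < q) by nra.
  assert (Hq43 : 4/3 < q) by nra.
  assert (D1 : (q - p) * (q + p) = 1) by nra.
  assert (D2 : 3 * (q - p) * (q*q) >= 2 * ((q - p) * (q + p))).
  { assert (0 < q - p) by lra. assert (3 * (q*q) >= 2 * (q+p)) by nra. nra. }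
  rewrite D1 in D2. replace (3 * (q - p) * (q * q)) with (3 * (q-p) * (x+1)) in D2 by (rewrite <- Hq2; ring).
  assert (2 / (x+1) <= 3 * (q - p)).
  { apply (Rmult_le_reg_r (x+1)); [lra|]. unfold Rdiv. rewrite Rmult_assoc, Rinv_l by lra. lra. }
  lra.
Qed.


Section PerN.
Variables (N : nat) (a b c : nat -> R).
Hypothesis HN : (1 <= N)%nat.
Hypothesis H : model2_seqs N a b c.

Lemma c_pos n : (1 <= n <= N)%nat -> 0 < c n.
Proof. destruct H as [Hc _]. apply Hc. Qed.

Lemma rel_c m : (1 <= m <= N - 1)%nat ->
  (1 - c m ^ 2) / (c m * sqrt (1 + c m ^ 2)) = 1 / (c (S m) * (1 + c (S m) ^ 2)).
Proof.
  intro Hm. destruct H as [Hc [Ha0 [Hb0 [Hc0 Hrec]]]].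
  destruct (Hrec m Hm) as [_ [_ Hs]]. rewrite <- Hs.
  destruct (Nat.eq_dec m (N - 1)) as [E|E].
  - subst m. replace (S (N-1)) with N by lia. rewrite Ha0, Hb0, Hc0. field.
  - destruct (Hrec (S m) ltac:(lia)) as [HA [HB HS]].
    replace (S m - 1)%nat with m in HA, HB by lia.
    destruct (step_alg _ _ _ _ _ (c_pos (S m) ltac:(lia)) HA HB HS) as [K _].
    exact K.
Qed.

Lemma d_bounds n : (1 <= n <= N - 1)%nat -> 0 <= b n - a n <= 1.
Proof.
  destruct H as [Hc [Ha0 [Hb0 [Hc0 Hrec]]]].
  assert (G : forall k, (k <= N - 2)%nat -> 0 <= b (N-1-k)%nat - a (N-1-k)%nat <= 1).
  { induction k as [|k IH]; intro Hk.
    - replace (N-1-0)%nat with (N-1)%nat by lia. rewrite Ha0, Hb0. lra.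
    - set (j := (N-1-k)%nat) in *.
      destruct (Hrec j ltac:(unfold j; lia)) as [HA [HB HS]].
      replace (N - 1 - S k)%nat with (j - 1)%nat by (unfold j; lia).
      destruct (step_alg _ _ _ _ _ (c_pos j ltac:(unfold j; lia)) HA HB HS) as [_ K].
      rewrite K. apply d_bound_step. apply c_pos; unfold j; lia. apply IH; lia. }
  intro Hn. replace n with (N - 1 - (N - 1 - n))%nat by lia. apply G. lia.
Qed.

Lemma u_bounds k : (k <= N - 1)%nat ->
  (INR k + 2) / 2 <= / c (N - k)%nat ^ 2 <= INR k + 1 /\
  INR k + 1 - 3 * sqrt (INR k + 1) <= / c (N - k)%nat ^ 2.
Proof.
  destruct H as [Hc [Ha0 [Hb0 [Hc0 Hrec]]]].
  induction k as [|k IH]; intro Hk.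
  - replace (N - 0)%nat with N by lia. rewrite Hc0. replace (INR 0) with 0 by reflexivity. replace (/ 1^2) with 1 by field. replace (0+1) with 1 by ring. rewrite sqrt_1.
    assert (0 <= sqrt 1) by apply sqrt_pos. split; [split|]; lra.
  - set (m := (N - S k)%nat).
    assert (Hm : (1 <= m <= N - 1)%nat) by (unfold m; lia).
    assert (HSm : S m = (N - k)%nat) by (unfold m; lia).
    destruct (IH ltac:(lia)) as [[IH1 IH2] IH3].
    pose proof (rel_c m Hm) as R.
    destruct (pair_rel (c m) (c (S m)) (c_pos m ltac:(lia)) (c_pos (S m) ltac:(lia)) R)
      as [P1 [P2 P3]].
    rewrite HSm in P2, P3.
    set (v := / c (N - k)%nat ^ 2) in *. set (u := / c m ^ 2) in *.
    assert (Hk0 : 0 <= INR k) by apply pos_INR.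
    assert (Hv1 : 1 <= v) by lra.
    destruct (P3 Hv1) as [P4 P5].
    rewrite S_INR.
    assert (Hiv : / v <= 2 / (INR k + 2)).
    { unfold Rdiv. rewrite <- (Rinv_inv 2).
      rewrite <- Rinv_mult. apply Rinv_le_contravar. apply Rmult_lt_0_compat; lra.
      replace (/ 2 * (INR k + 2)) with ((INR k + 2)/2) by field. lra. }
    pose proof (sqrt_step (INR k + 1) ltac:(lra)) as SQ.
    replace (INR k + 1 + 1) with (INR k + 2) in * by ring.
    split; [split|]; try lra.
Qed.

End PerN.


Lemma Sigma_pos S0 c m : 0 < S0 -> 0 < Sigma S0 c m.
Proof.
  intro H0. induction m; simpl; auto.
  apply Rdiv_lt_0_compat; auto. assert (0 <= c (S m) ^ 2) by (apply pow2_ge_0). lra.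
Qed.

Lemma frac_mono (u W : R) : 0 < u -> u <= W -> u / (u + 1) <= W / (W + 1).
Proof.
  intros Hu HW.
  apply (Rmult_le_reg_r ((u+1)*(W+1))). nra.
  replace (u / (u + 1) * ((u + 1) * (W + 1))) with (u * (W+1)) by (field; lra).
  replace (W / (W + 1) * ((u + 1) * (W + 1))) with (W * (u+1)) by (field; lra).
  nra.
Qed.

Lemma Sigma_bounds (S0 D : R) (N m : nat) (c : nat -> R) :
  0 < S0 -> 0 <= D -> (m <= N)%nat -> INR N - INR m + 1 - D > 0 ->
  (forall j, (1 <= j <= m)%nat -> 0 < c j /\
     INR N - INR j + 1 - D <= / c j ^ 2 <= INR N - INR j + 1) ->
  S0 * (INR N - INR m + 1 - D) / (INR N + 1 - D) <= Sigma S0 c m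
  <= S0 * (INR N - INR m + 1) / (INR N + 1).
Proof.
  intros H0 HD. induction m as [|p IH]; intros Hm HW Hc.
  - simpl Sigma. change (INR 0) with 0 in *. replace (INR N - 0 + 1 - D) with (INR N + 1 - D) by ring.
    replace (INR N - 0 + 1) with (INR N + 1) by ring.
    assert (0 <= INR N) by apply pos_INR.
    split; right; field; lra.
  - rewrite S_INR in HW |- *.
    destruct IH as [IL IU]. lia. lra. intros j Hj; apply Hc; lia.
    destruct (Hc (S p) ltac:(lia)) as [Hcp [Hl Hu]].
    rewrite S_INR in Hl, Hu.
    change (Sigma S0 c (S p)) with (Sigma S0 c p / (1 + c (S p) ^ 2)).
    set (W := INR N - INR p + 1) in *.
    replace (INR N - (INR p + 1) + 1) with (W - 1) in * by (unfold W; ring).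
    replace (INR N - (INR p + 1) + 1 - D) with (W - 1 - D) in * by (unfold W; ring).
    set (y := Sigma S0 c p) in *.
    assert (Hy : 0 < y) by (apply Sigma_pos; auto).
    set (x := c (S p)) in *.
    assert (Hx2 : 0 < x ^ 2) by (apply pow_lt; auto).
    set (u := / x ^ 2) in *.
    assert (Hxu : x ^ 2 = / u) by (unfold u; rewrite Rinv_inv; auto).
    assert (Hu0 : 0 < u) by lra.
    rewrite Hxu.
    replace (y / (1 + / u)) with (y * (u / (u + 1))) by (field; lra).
    assert (HN0 : 0 <= INR N) by apply pos_INR. assert (Hp0 : 0 <= INR p) by apply pos_INR. assert (HWN : W <= INR N + 1) by (unfold W; lra).
    split.
    + assert (F : (W - 1 - D) / (W - 1 - D + 1) <= u / (u + 1)) by (apply frac_mono; lra).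
      replace (W - 1 - D + 1) with (W - D) in F by ring.
      assert (F2 : S0 * (W - 1 - D) / (INR N + 1 - D) = S0 * (W - D) / (INR N + 1 - D) * ((W - 1 - D) / (W - D))) by (field; lra).
      rewrite F2.
      assert (0 <= (W - 1 - D) / (W - D)) by (apply Rdiv_le_0_compat; lra).
      assert (0 <= S0 * (W - D) / (INR N + 1 - D)) by (apply Rdiv_le_0_compat; nra).
      apply Rmult_le_compat; auto.
    + assert (F : u / (u + 1) <= (W - 1) / (W - 1 + 1)) by (apply frac_mono; lra).
      replace (W - 1 + 1) with W in F by ring.
      assert (F2 : S0 * (W - 1) / (INR N + 1) = S0 * W / (INR N + 1) * ((W - 1) / W)) by (field; lra).
      rewrite F2.
      assert (0 <= u / (u + 1)) by (apply Rdiv_le_0_compat; lra).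
      apply Rmult_le_compat; auto. lra.
Qed.


Lemma ipart_spec x : 0 <= x -> INR (ipart x) <= x < INR (ipart x) + 1.
Proof.
  intro Hx. unfold ipart. destruct (base_Int_part x) as [H1 H2].
  set (z := Int_part x) in *.
  assert (Hz : (0 <= z)%Z).
  { assert (IZR (-1) < IZR z) by (replace (IZR (-1)) with (-1) by reflexivity; lra).
    apply lt_IZR in H. lia. }
  rewrite INR_IZR_INZ, Znat.Z2Nat.id by exact Hz. lra.
Qed.

Lemma lim_invN : is_lim_seq (fun N => / INR N) 0.
Proof.
  replace (Finite 0) with (Rbar_inv p_infty) by reflexivity.
  apply is_lim_seq_inv. apply is_lim_seq_INR. discriminate.
Qed.

Lemma lim_sqrt_dt : is_lim_seq (fun N => sqrt (dt N)) 0.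
Proof.
  rewrite <- sqrt_0. unfold dt.
  apply is_lim_seq_continuous. apply continuity_pt_sqrt; lra. apply lim_invN.
Qed.

Lemma lim_sqrtN : is_lim_seq (fun N => sqrt (INR N)) p_infty.
Proof.
  unfold is_lim_seq. eapply filterlim_comp. apply is_lim_seq_INR.
  apply filterlim_sqrt_p.
Qed.

Lemma lim_D : is_lim_seq (fun N => sqrt (INR N + 1) / INR N) 0.
Proof.
  apply is_lim_seq_ext_loc with (fun N => sqrt (/ INR N + / INR N * / INR N)).
  - exists 1%nat. intros N HN.
    assert (HN' : 1 <= INR N) by (apply (le_INR 1); lia).
    replace (/ INR N + / INR N * / INR N) with ((INR N + 1) * (/ INR N)^2) by (field; lra).
    rewrite sqrt_mult. rewrite sqrt_pow2. reflexivity.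
    left; apply Rinv_0_lt_compat; lra. lra.
    apply pow2_ge_0.
  - rewrite <- sqrt_0. apply is_lim_seq_continuous. apply continuity_pt_sqrt; lra.
    replace 0 with (0 + 0 * 0) by ring.
    apply is_lim_seq_plus'. apply lim_invN. apply is_lim_seq_mult'; apply lim_invN.
Qed.

Section Lims.
Variable t : R.
Hypothesis Ht : 0 < t < 1.
Let n (N : nat) := ipart (INR N * t).

Lemma n_spec N : INR (n N) <= INR N * t < INR (n N) + 1.
Proof. apply ipart_spec. assert (0 <= INR N) by apply pos_INR. nra. Qed.

Lemma lim_ratio : is_lim_seq (fun N => INR (n N) / INR N) t.
Proof.
  apply is_lim_seq_le_le_loc with (fun N => t - / INR N) (fun N => t).
  - exists 1%nat. intros N HN.
    assert (HN' : 1 <= INR N) by (apply (le_INR 1); lia).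
    destruct (n_spec N) as [A B]. split.
    + apply (Rmult_le_reg_r (INR N)); [lra|].
      replace ((t - / INR N) * INR N) with (INR N * t - 1) by (field; lra).
      replace (INR (n N) / INR N * INR N) with (INR (n N)) by (field; lra). lra.
    + apply (Rmult_le_reg_r (INR N)); [lra|].
      replace (INR (n N) / INR N * INR N) with (INR (n N)) by (field; lra). lra.
  - replace (Finite t) with (Finite (t - 0)) by (f_equal; ring). apply is_lim_seq_minus'.
    apply is_lim_seq_const. apply lim_invN.
  - apply is_lim_seq_const.
Qed.

Lemma lim_W (e : R) : is_lim_seq (fun N => (INR N - INR (n N) + e) / INR N) (1 - t).
Proof.
  apply is_lim_seq_ext_loc with (fun N => 1 - INR (n N) / INR N + e * / INR N).
  - exists 1%nat. intros N HN.
    assert (HN' : 1 <= INR N) by (apply (le_INR 1); lia). field. lra.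
  - replace (1 - t) with (1 - t + e * 0) by ring.
    apply is_lim_seq_plus'. apply is_lim_seq_minus'. apply is_lim_seq_const.
    apply lim_ratio. apply is_lim_seq_mult'. apply is_lim_seq_const. apply lim_invN.
Qed.

Lemma lim_WD (e : R) : is_lim_seq (fun N => (INR N - INR (n N) + e - 3 * sqrt (INR N + 1)) / INR N) (1 - t).
Proof.
  apply is_lim_seq_ext with (fun N => (INR N - INR (n N) + e) / INR N - 3 * (sqrt (INR N + 1) / INR N)).
  - intro N. unfold Rdiv. ring.
  - replace (1 - t) with (1 - t - 3 * 0) by ring.
    apply is_lim_seq_minus'. apply lim_W. apply is_lim_seq_mult'. apply is_lim_seq_const. apply lim_D.
Qed.

Lemma lim_N1D : is_lim_seq (fun N => (INR N + 1 - 3 * sqrt (INR N + 1)) / INR N) 1.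
Proof.
  apply is_lim_seq_ext_loc with (fun N => 1 + / INR N - 3 * (sqrt (INR N + 1) / INR N)).
  - exists 1%nat. intros N HN.
    assert (HN' : 1 <= INR N) by (apply (le_INR 1); lia). field. lra.
  - replace (Finite 1) with (Finite (1 + 0 - 3 * 0)) by (f_equal; ring).
    apply is_lim_seq_minus'. apply is_lim_seq_plus'. apply is_lim_seq_const.
    apply lim_invN. apply is_lim_seq_mult'. apply is_lim_seq_const. apply lim_D.
Qed.

Lemma lim_N1 : is_lim_seq (fun N => (INR N + 1) / INR N) 1.
Proof.
  apply is_lim_seq_ext_loc with (fun N => 1 + / INR N).
  - exists 1%nat. intros N HN.
    assert (HN' : 1 <= INR N) by (apply (le_INR 1); lia). field. lra.
  - replace (Finite 1) with (Finite (1 + 0)) by (f_equal; ring).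
    apply is_lim_seq_plus'. apply is_lim_seq_const. apply lim_invN.
Qed.

End Lims.


Section Main.
Variables (a b c : nat -> nat -> R) (Sigma0 sigu t : R).
Hypothesis HS0 : 0 < Sigma0.
Hypothesis Hsig : 0 < sigu.
Hypothesis Hmod : forall N : nat, (1 <= N)%nat -> model2_seqs N (a N) (b N) (c N).
Hypothesis Ht : 0 < t < 1.

Let n (N : nat) := ipart (INR N * t).
Let D (N : nat) := 3 * sqrt (INR N + 1).

Definition EV (N : nat) : Prop :=
  (1 <= N)%nat /\ (1 <= n N)%nat /\ (n N <= N - 1)%nat /\
  INR N - INR (n N) - D N > 0.

Lemma EV_ev : eventually EV.
Proof.
  assert (E1 : eventually (fun N => / t < INR N)).
  { pose proof is_lim_seq_INR as L. apply is_lim_seq_spec in L. apply (L (/ t)). }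
  assert (E2 : eventually (fun N => 0 < (INR N - INR (n N) + 0 - 3 * sqrt (INR N + 1)) / INR N)).
  { pose proof (lim_WD t Ht 0) as L. apply is_lim_seq_spec in L.
    assert (Hp : 0 < 1 - t) by lra.
    specialize (L (mkposreal _ Hp)). eapply filter_imp; [|exact L].
    intros N HN. simpl in HN. apply Rabs_lt_between in HN. unfold n. lra. }
  assert (E3 : eventually (fun N => (1 <= N)%nat)) by (exists 1%nat; auto).
  pose proof (filter_and _ _ E1 (filter_and _ _ E2 E3)) as E.
  eapply filter_imp; [|exact E]. intros N [A1 [A2 A3]].
  assert (HN' : 1 <= INR N) by (apply (le_INR 1); lia).
  destruct (n_spec t Ht N) as [B1 B2]. fold (n N) in B1, B2.
  unfold EV. split; [auto|]. split; [|split].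
  - destruct (Nat.eq_dec (n N) 0) as [Z|Z]; [|lia].
    exfalso. rewrite Z in B2. simpl in B2.
    assert (INR N * t > 1).
    { apply (Rmult_lt_compat_r t) in A1; [|lra]. rewrite Rinv_l in A1; lra. }
    lra.
  - assert (INR (n N) < INR N) by nra. apply INR_lt in H. lia.
  - assert (0 < INR N - INR (n N) + 0 - 3 * sqrt (INR N + 1)).
    { apply (Rmult_lt_reg_r (/ INR N)). apply Rinv_0_lt_compat; lra. rewrite Rmult_0_l. exact A2. }
    unfold D. lra.
Qed.


Lemma jbound N : (1 <= N)%nat -> forall j, (1 <= j <= N)%nat ->
  0 < c N j /\ (INR N - INR j + 1 - D N <= / c N j ^ 2 <= INR N - INR j + 1) /\
  INR N - INR j + 1 - 3 * sqrt (INR N - INR j + 1) <= / c N j ^ 2.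
Proof.
  intros HN j Hj.
  pose proof (Hmod N HN) as Hm.
  destruct (u_bounds N (a N) (b N) (c N) HN Hm (N - j)%nat ltac:(lia)) as [[U1 U2] U3].
  replace (N - (N - j))%nat with j in * by lia.
  rewrite minus_INR in U1, U2, U3 by lia.
  assert (Hj0 : 0 <= INR j) by apply pos_INR.
  assert (Hj1 : 1 <= INR j) by (apply (le_INR 1); lia).
  assert (HjN : INR j <= INR N) by (apply le_INR; lia).
  assert (sqrt (INR N - INR j + 1) <= sqrt (INR N + 1)) by (apply sqrt_le_1_alt; lra).
  split; [apply (c_pos N (a N) (b N) (c N) Hm); lia|].
  unfold D. split; [split|]; lra.
Qed.

Lemma KEY N : EV N ->
  0 < c N (n N) /\
  ((INR N - INR (n N) + 1 - 3 * sqrt (INR N + 1)) / INR N <= / c N (n N) ^ 2 / INR N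
     <= (INR N - INR (n N) + 1) / INR N) /\
  (0 <= b N (n N) - a N (n N) <= 1) /\
  a N (n N) + b N (n N) = (1 - c N (n N) ^ 2) / (c N (n N) * sqrt (1 + c N (n N) ^ 2)) /\
  (Sigma0 * (INR N - INR (n N) + 1 - 3 * sqrt (INR N + 1)) / (INR N + 1 - 3 * sqrt (INR N + 1))
     <= Sigma Sigma0 (c N) (n N) <= Sigma0 * (INR N - INR (n N) + 1) / (INR N + 1)) /\
  Sigma0 * (INR N - INR (n N) + 2 - 3 * sqrt (INR N + 1)) / (INR N + 1 - 3 * sqrt (INR N + 1))
     <= Sigma Sigma0 (c N) (n N - 1) <= Sigma0 * (INR N - INR (n N) + 2) / (INR N + 1).
Proof.
  intros [HN [Hn1 [Hn2 HW]]].
  pose proof (Hmod N HN) as Hm.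
  assert (HN' : 1 <= INR N) by (apply (le_INR 1); lia).
  assert (Hn' : INR (n N) <= INR N - 1).
  { assert (INR (S (n N)) <= INR N) by (apply le_INR; lia). rewrite S_INR in H. lra. }
  assert (HD0 : 0 <= D N) by (unfold D; assert (0 <= sqrt (INR N + 1)) by apply sqrt_pos; lra).
  destruct (jbound N HN (n N) ltac:(lia)) as [C0 [[C1 C2] C3]].
  split; [exact C0|].
  split.
  { unfold D in *. split; unfold Rdiv; apply Rmult_le_compat_r;
      try (left; apply Rinv_0_lt_compat; lra); lra. }
  split; [apply (d_bounds N (a N) (b N) (c N) HN Hm); lia|].
  split.
  { destruct Hm as [_ [_ [_ [_ Hrec]]]]. apply (Hrec (n N)). lia. }
  fold (D N).
  split.
  - apply Sigma_bounds; auto. lia. lra.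
    intros j Hj. destruct (jbound N HN j ltac:(lia)) as [J0 [J1 _]]. auto.
  - assert (E : INR N - INR (n N) + 2 = INR N - INR (n N - 1) + 1)
      by (rewrite minus_INR, INR_1 by lia; ring).
    rewrite E. assert (INR (n N - 1) <= INR (n N)) by (apply le_INR; lia).
    apply Sigma_bounds; auto. lia. lra.
    intros j Hj. destruct (jbound N HN j ltac:(lia)) as [J0 [J1 _]]. auto.
Qed.


Lemma EVK : eventually (fun N => EV N).
Proof. apply EV_ev. Qed.

Lemma L_u : is_lim_seq (fun N => / c N (n N) ^ 2 / INR N) (1 - t).
Proof.
  apply is_lim_seq_le_le_loc with
    (fun N => (INR N - INR (n N) + 1 - 3 * sqrt (INR N + 1)) / INR N)
    (fun N => (INR N - INR (n N) + 1) / INR N).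
  - eapply filter_imp; [|exact EVK]. intros N HN. apply (KEY N HN).
  - apply lim_WD; auto.
  - apply lim_W; auto.
Qed.

Lemma L_X : is_lim_seq (fun N => c N (n N) / sqrt (dt N)) (1 / sqrt (1 - t)).
Proof.
  apply is_lim_seq_ext_loc with (fun N => sqrt (/ (/ c N (n N) ^ 2 / INR N))).
  - eapply filter_imp; [|exact EVK]. intros N HN.
    destruct (KEY N HN) as [C0 _]. destruct HN as [HN _].
    assert (HN' : 1 <= INR N) by (apply (le_INR 1); lia).
    replace (/ (/ c N (n N) ^ 2 / INR N)) with (c N (n N) ^ 2 * INR N) by (field; split; lra).
    unfold dt. rewrite sqrt_inv.
    rewrite sqrt_mult, sqrt_pow2 by (try apply pow2_ge_0; lra).
    assert (0 < sqrt (INR N)) by (apply sqrt_lt_R0; lra).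
    field. lra.
  - replace (1 / sqrt (1 - t)) with (sqrt (/ (1 - t))).
    + apply is_lim_seq_continuous. apply sqrt_continuity_pt.
      apply Rinv_0_lt_compat; lra.
      replace (Finite (/ (1 - t))) with (Rbar_inv (1 - t)) by reflexivity.
      apply is_lim_seq_inv. apply L_u. intro E. injection E. lra.
    + rewrite sqrt_inv. assert (0 < sqrt (1 - t)) by (apply sqrt_lt_R0; lra). field. lra.
Qed.

Lemma L_c0 : is_lim_seq (fun N => c N (n N)) 0.
Proof.
  apply is_lim_seq_ext_loc with (fun N => c N (n N) / sqrt (dt N) * sqrt (dt N)).
  - eapply filter_imp; [|exact EVK]. intros N [HN _].
    assert (HN' : 1 <= INR N) by (apply (le_INR 1); lia).
    assert (0 < sqrt (dt N)) by (apply sqrt_lt_R0; unfold dt; apply Rinv_0_lt_compat; lra).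
    field. lra.
  - replace (Finite 0) with (Finite (1 / sqrt (1 - t) * 0)) by (f_equal; ring).
    apply is_lim_seq_mult'. apply L_X. apply lim_sqrt_dt.
Qed.

Lemma L_c2 : is_lim_seq (fun N => c N (n N) ^ 2) 0.
Proof.
  apply is_lim_seq_ext with (fun N => c N (n N) * c N (n N)). intro; ring.
  replace (Finite 0) with (Finite (0 * 0)) by (f_equal; ring).
  apply is_lim_seq_mult'; apply L_c0.
Qed.

Lemma L_s : is_lim_seq (fun N => (a N (n N) + b N (n N)) * sqrt (dt N)) (sqrt (1 - t)).
Proof.
  apply is_lim_seq_ext_loc with
    (fun N => (1 - c N (n N) ^ 2) / (c N (n N) / sqrt (dt N) * sqrt (1 + c N (n N) ^ 2))).
  - eapply filter_imp; [|exact EVK]. intros N HN.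
    destruct (KEY N HN) as [C0 [_ [_ [S _]]]]. destruct HN as [HN _].
    rewrite S.
    assert (HN' : 1 <= INR N) by (apply (le_INR 1); lia).
    assert (0 < sqrt (dt N)) by (apply sqrt_lt_R0; unfold dt; apply Rinv_0_lt_compat; lra).
    assert (0 < sqrt (1 + c N (n N) ^ 2)) by (apply sqrt_lt_R0; assert (0 <= c N (n N) ^ 2) by apply pow2_ge_0; lra).
    field. repeat split; lra.
  - replace (sqrt (1 - t)) with ((1 - 0) / (1 / sqrt (1 - t) * sqrt (1 + 0))).
    + apply is_lim_seq_div'. apply is_lim_seq_minus'. apply is_lim_seq_const. apply L_c2.
      apply is_lim_seq_mult'. apply L_X.
      apply is_lim_seq_continuous. apply sqrt_continuity_pt; lra.
      apply is_lim_seq_plus'. apply is_lim_seq_const. apply L_c2.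
      rewrite Rplus_0_r, sqrt_1. assert (0 < sqrt (1 - t)) by (apply sqrt_lt_R0; lra).
      apply Rgt_not_eq. apply Rlt_gt. rewrite Rmult_1_r. apply Rdiv_lt_0_compat; lra.
    + rewrite Rplus_0_r, sqrt_1. assert (0 < sqrt (1 - t)) by (apply sqrt_lt_R0; lra). field. lra.
Qed.

Lemma L_d : is_lim_seq (fun N => (b N (n N) - a N (n N)) * sqrt (dt N)) 0.
Proof.
  apply is_lim_seq_le_le_loc with (fun N => 0) (fun N => sqrt (dt N)).
  - eapply filter_imp; [|exact EVK]. intros N HN.
    destruct (KEY N HN) as [_ [_ [Dd _]]]. assert (0 <= sqrt (dt N)) by apply sqrt_pos.
    split. apply Rmult_le_pos; lra.
    replace (sqrt (dt N)) with (1 * sqrt (dt N)) at 2 by ring. apply Rmult_le_compat_r; lra.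
  - apply is_lim_seq_const.
  - apply lim_sqrt_dt.
Qed.

Lemma L_b : is_lim_seq (fun N => b N (n N) * sqrt (dt N)) (1 / 2 * sqrt (1 - t)).
Proof.
  apply is_lim_seq_ext with (fun N => ((a N (n N) + b N (n N)) * sqrt (dt N) + (b N (n N) - a N (n N)) * sqrt (dt N)) / 2).
  intro N; field.
  replace (1 / 2 * sqrt (1 - t)) with ((sqrt (1 - t) + 0) / 2) by field.
  apply is_lim_seq_div'. apply is_lim_seq_plus'. apply L_s. apply L_d. apply is_lim_seq_const. lra.
Qed.

Lemma L_a : is_lim_seq (fun N => a N (n N) * sqrt (dt N)) (1 / 2 * sqrt (1 - t)).
Proof.
  apply is_lim_seq_ext with (fun N => ((a N (n N) + b N (n N)) * sqrt (dt N) - (b N (n N) - a N (n N)) * sqrt (dt N)) / 2).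
  intro N; field.
  replace (1 / 2 * sqrt (1 - t)) with ((sqrt (1 - t) - 0) / 2) by field.
  apply is_lim_seq_div'. apply is_lim_seq_minus'. apply L_s. apply L_d. apply is_lim_seq_const. lra.
Qed.

Lemma to_infty (u : nat -> R) : is_lim_seq (fun N => u N * sqrt (dt N)) (1 / 2 * sqrt (1 - t)) ->
  is_lim_seq u p_infty.
Proof.
  intro L.
  apply is_lim_seq_ext_loc with (fun N => u N * sqrt (dt N) * sqrt (INR N)).
  - exists 1%nat. intros N HN.
    assert (HN' : 1 <= INR N) by (apply (le_INR 1); lia).
    unfold dt. rewrite sqrt_inv. assert (0 < sqrt (INR N)) by (apply sqrt_lt_R0; lra).
    field. lra.
  - eapply is_lim_seq_mult. apply L. apply lim_sqrtN.
    apply is_Rbar_mult_sym. apply is_Rbar_mult_p_infty_pos.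
    simpl. assert (0 < sqrt (1 - t)) by (apply sqrt_lt_R0; lra). lra.
Qed.

Lemma Sig_lim (e : R) (x : nat -> R) :
  eventually (fun N => Sigma0 * (INR N - INR (n N) + e - 3 * sqrt (INR N + 1)) / (INR N + 1 - 3 * sqrt (INR N + 1))
     <= x N <= Sigma0 * (INR N - INR (n N) + e) / (INR N + 1)) ->
  is_lim_seq x ((1 - t) * Sigma0).
Proof.
  intro Ev.
  assert (Ev2 : eventually (fun N => EV N /\ Sigma0 * (INR N - INR (n N) + e - 3 * sqrt (INR N + 1)) / (INR N + 1 - 3 * sqrt (INR N + 1))
     <= x N <= Sigma0 * (INR N - INR (n N) + e) / (INR N + 1))) by (apply filter_and; auto; apply EVK).
  apply is_lim_seq_le_le_loc with
    (fun N => Sigma0 * ((INR N - INR (n N) + e - 3 * sqrt (INR N + 1)) / INR N) / ((INR N + 1 - 3 * sqrt (INR N + 1)) / INR N))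
    (fun N => Sigma0 * ((INR N - INR (n N) + e) / INR N) / ((INR N + 1) / INR N)).
  - eapply filter_imp; [|exact Ev2]. intros N [[HN [_ [Hn2 HW]]] B].
    assert (HN' : 1 <= INR N) by (apply (le_INR 1); lia).
    unfold D in HW. assert (0 <= INR (n N)) by apply pos_INR.
    replace (Sigma0 * ((INR N - INR (n N) + e - 3 * sqrt (INR N + 1)) / INR N) / ((INR N + 1 - 3 * sqrt (INR N + 1)) / INR N))
      with (Sigma0 * (INR N - INR (n N) + e - 3 * sqrt (INR N + 1)) / (INR N + 1 - 3 * sqrt (INR N + 1))) by (field; lra).
    replace (Sigma0 * ((INR N - INR (n N) + e) / INR N) / ((INR N + 1) / INR N))
      with (Sigma0 * (INR N - INR (n N) + e) / (INR N + 1)) by (field; lra).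
    exact B.
  - replace ((1 - t) * Sigma0) with (Sigma0 * (1 - t) / 1) by field.
    apply is_lim_seq_div'. apply is_lim_seq_mult'. apply is_lim_seq_const. apply (lim_WD t Ht e).
    apply (lim_N1D t Ht). lra.
  - replace ((1 - t) * Sigma0) with (Sigma0 * (1 - t) / 1) by field.
    apply is_lim_seq_div'. apply is_lim_seq_mult'. apply is_lim_seq_const. apply (lim_W t Ht e).
    apply (lim_N1 t Ht). lra.
Qed.

Lemma L_Sig : is_lim_seq (fun N => Sigma Sigma0 (c N) (n N)) ((1 - t) * Sigma0).
Proof.
  apply (Sig_lim 1). eapply filter_imp; [|exact EVK]. intros N HN. apply (KEY N HN).
Qed.

Lemma L_Sig' : is_lim_seq (fun N => Sigma Sigma0 (c N) (n N - 1)) ((1 - t) * Sigma0).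
Proof.
  apply (Sig_lim 2). eapply filter_imp; [|exact EVK]. intros N HN. apply (KEY N HN).
Qed.

Lemma L_sqSig' : is_lim_seq (fun N => sqrt (Sigma Sigma0 (c N) (n N - 1))) (sqrt (1 - t) * sqrt Sigma0).
Proof.
  rewrite <- sqrt_mult by lra. apply is_lim_seq_continuous.
  apply sqrt_continuity_pt. nra. apply L_Sig'.
Qed.

Lemma L_lambda : is_lim_seq (fun N => lambda N Sigma0 sigu (c N) (n N)) (sqrt Sigma0 / sigu).
Proof.
  apply is_lim_seq_ext_loc with
    (fun N => c N (n N) / sqrt (dt N) * sqrt (Sigma Sigma0 (c N) (n N - 1)) / (sigu * (1 + c N (n N) ^ 2))).
  - eapply filter_imp; [|exact EVK]. intros N [HN _].
    assert (HN' : 1 <= INR N) by (apply (le_INR 1); lia).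
    unfold lambda, beta.
    assert (Hdt : 0 < dt N) by (unfold dt; apply Rinv_0_lt_compat; lra).
    assert (HS : 0 < Sigma Sigma0 (c N) (n N - 1)) by (apply Sigma_pos; auto).
    assert (Q1 : sqrt (dt N) * sqrt (dt N) = dt N) by (apply sqrt_sqrt; lra).
    assert (Q2 : sqrt (Sigma Sigma0 (c N) (n N - 1)) * sqrt (Sigma Sigma0 (c N) (n N - 1)) = Sigma Sigma0 (c N) (n N - 1)) by (apply sqrt_sqrt; lra).
    assert (0 < sqrt (dt N)) by (apply sqrt_lt_R0; lra).
    assert (0 < sqrt (Sigma Sigma0 (c N) (n N - 1))) by (apply sqrt_lt_R0; lra).
    set (S := Sigma Sigma0 (c N) (n N - 1)) in *.
    set (q := sqrt (dt N)) in *. set (s := sqrt S) in *.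
    rewrite <- Q1, <- Q2. set (x := c N (n N)).
    clearbody s q x S.
    assert (P : 0 < sigu^2*(q*q)*(1+x^2)) by (apply Rmult_lt_0_compat; [apply Rmult_lt_0_compat|]; nra).
    assert (P2 : (x * sigu * q) ^ 2 + sigu ^ 2 * (q * q) <> 0).
    { replace ((x * sigu * q) ^ 2 + sigu ^ 2 * (q * q)) with (sigu^2*(q*q)*(1+x^2)) by ring. lra. }
    field. repeat split; try lra. nra.
  - replace (sqrt Sigma0 / sigu) with (1 / sqrt (1 - t) * (sqrt (1 - t) * sqrt Sigma0) / (sigu * (1 + 0))).
    + apply is_lim_seq_div'. apply is_lim_seq_mult'. apply L_X. apply L_sqSig'.
      apply is_lim_seq_mult'. apply is_lim_seq_const. apply is_lim_seq_plus'. apply is_lim_seq_const. apply L_c2.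
      lra.
    + assert (0 < sqrt (1 - t)) by (apply sqrt_lt_R0; lra). field. lra.
Qed.

Lemma L_beta : is_lim_seq (fun N => beta N Sigma0 sigu (c N) (n N) / dt N) (sigu / ((1 - t) * sqrt Sigma0)).
Proof.
  apply is_lim_seq_ext_loc with
    (fun N => c N (n N) / sqrt (dt N) * sigu / sqrt (Sigma Sigma0 (c N) (n N - 1))).
  - eapply filter_imp; [|exact EVK]. intros N [HN _].
    assert (HN' : 1 <= INR N) by (apply (le_INR 1); lia).
    unfold beta.
    assert (Hdt : 0 < dt N) by (unfold dt; apply Rinv_0_lt_compat; lra).
    assert (HS : 0 < Sigma Sigma0 (c N) (n N - 1)) by (apply Sigma_pos; auto).
    assert (Q1 : sqrt (dt N) * sqrt (dt N) = dt N) by (apply sqrt_sqrt; lra).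
    assert (0 < sqrt (dt N)) by (apply sqrt_lt_R0; lra).
    assert (0 < sqrt (Sigma Sigma0 (c N) (n N - 1))) by (apply sqrt_lt_R0; lra).
    set (q := sqrt (dt N)) in *. rewrite <- Q1. clearbody q. field. split; lra.
  - assert (0 < sqrt (1 - t)) by (apply sqrt_lt_R0; lra).
    assert (0 < sqrt Sigma0) by (apply sqrt_lt_R0; lra).
    assert (Q : sqrt (1 - t) * sqrt (1 - t) = 1 - t) by (apply sqrt_sqrt; lra).
    replace (sigu / ((1 - t) * sqrt Sigma0)) with (1 / sqrt (1 - t) * sigu / (sqrt (1 - t) * sqrt Sigma0)).
    + apply is_lim_seq_div'. apply is_lim_seq_mult'. apply L_X. apply is_lim_seq_const.
      apply L_sqSig'. nra.
    + set (r := sqrt (1 - t)) in *. rewrite <- Q. clearbody r. field. lra.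
Qed.

End Main.

Theorem theorem4 (a b c : nat -> nat -> R) (Sigma0 sigu : R) :
  0 < Sigma0 -> 0 < sigu ->
  (forall N : nat, (1 <= N)%nat -> model2_seqs N (a N) (b N) (c N)) ->
  forall t : R, 0 < t < 1 ->
    is_lim_seq (fun N => c N (ipart (INR N * t))) 0 /\
    is_lim_seq (fun N => b N (ipart (INR N * t))) p_infty /\
    is_lim_seq (fun N => a N (ipart (INR N * t))) p_infty /\
    is_lim_seq (fun N => c N (ipart (INR N * t)) / sqrt (dt N))
               (1 / sqrt (1 - t)) /\
    is_lim_seq (fun N => b N (ipart (INR N * t)) * sqrt (dt N))
               (1 / 2 * sqrt (1 - t)) /\
    is_lim_seq (fun N => a N (ipart (INR N * t)) * sqrt (dt N))
               (1 / 2 * sqrt (1 - t)) /\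
    is_lim_seq (fun N => Sigma Sigma0 (c N) (ipart (INR N * t)))
               ((1 - t) * Sigma0) /\
    is_lim_seq (fun N => lambda N Sigma0 sigu (c N) (ipart (INR N * t)))
               (sqrt Sigma0 / sigu) /\
    is_lim_seq (fun N => beta N Sigma0 sigu (c N) (ipart (INR N * t)) / dt N)
               (sigu / ((1 - t) * sqrt Sigma0)).
Proof.
  intros HS0 Hsig Hmod t Ht.
  split; [eapply L_c0; eauto|].
  split; [eapply to_infty; eauto; eapply L_b; eauto|].
  split; [eapply to_infty; eauto; eapply L_a; eauto|].
  split; [eapply L_X; eauto|].
  split; [eapply L_b; eauto|].
  split; [eapply L_a; eauto|].
  split; [eapply L_Sig; eauto|].
  split; [eapply L_lambda; eauto|].
  eapply L_beta; eauto.
Qed.
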